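(* Let $m$ be a positive integer, $r\geq 1$ and $\mathbf{p}=(p_1,\dots,p_m),\mathbf{q}=(q_1,\dots,q_m)\in[1,\infty]^m$. Suppose that either (a) $q_k\geq p_k$ for $k=1,\dots,m$ and $\frac1r-\left|\frac1{\mathbf{p}}\right|+\left|\frac1{\mathbf{q}}\right|>0$, or (b) $q_k\geq p_k$ for $k=2,\dots,m$, $q_1>p_1$, and $\frac1r-\left|\frac1{\mathbf{p}}\right|+\left|\frac1{\mathbf{q}}\right|\geq 0$. Define $\mathbf{s}=(s_1,\dots,s_m)$ by \[ \frac1{s_k}-\left|\frac1{\mathbf{q}}\right|_{\geq k}=\frac1r-\left|\frac1{\mathbf{p}}\right|_{\geq k},\qquad k=1,\dots,m, \] and assume $\mathbf{s}\in[1,\infty]^m$. Then for all Banach spaces $X_1,\dots,X_m,Y$ over $\mathbb{K}$, \[ \Pi^m_{(r;\mathbf{p})}(X_1,\dots,X_m;Y)\subset\Pi^m_{(\mathbf{s};\mathbf{q})}(X_1,\dots,X_m;Y), \] and the inclusion operator has norm $1$, i.e. $\pi_{(\mathbf{s};\mathbf{q})}(T)\le \pi_{(r;\mathbf{p})}(T)$ for every $T$ in the first space.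
   Context: $\mathbb{K}=\mathbb{R}$ or $\mathbb{C}$; $1/\infty:=0$. For $\mathbf{p}\in[1,\infty]^m$, $\left|\frac1{\mathbf{p}}\right|_{\geq k}:=\frac1{p_k}+\cdots+\frac1{p_m}$ and $\left|\frac1{\mathbf{p}}\right|:=\left|\frac1{\mathbf{p}}\right|_{\geq1}$. For a finite sequence $(x_j)_{j=1}^n$ in a Banach space $X$ and $p\in[1,\infty]$, $\|(x_j)_{j=1}^n\|_{w,p}:=\sup_{\varphi\in B_{X^*}}\|(\varphi(x_j))_{j=1}^n\|_{\ell_p}$. For $\mathbf{r}\in[1,\infty]^m$, $\mathbf{p}\in[1,\infty]^m$, a continuous $m$-linear map $T:X_1\times\cdots\times X_m\to Y$ is multiple $(\mathbf{r};\mathbf{p})$-summing if there is $C>0$ such that for all $n$ and all sequences $(x^{(k)}_j)_{j=1}^n\subset X_k$, \[ \left(\sum_{j_1=1}^n\left(\cdots\left(\sum_{j_m=1}^n\|T(x^{(1)}_{j_1},\dots,x^{(m)}_{j_m})\|^{r_m}\right)^{\frac{r_{m-1}}{r_m}}\cdots\right)^{\frac{r_1}{r_2}}\right)^{\frac1{r_1}}\le C\prod_{k=1}^m\|(x^{(k)}_j)_{j=1}^n\|_{w,p_k}, \] where any sum with exponent $\infty$ is replaced by a supremum. The space of such maps is $\Pi^m_{(\mathbf{r};\mathbf{p})}(X_1,\dots,X_m;Y)$, with norm $\pi_{(\mathbf{r};\mathbf{p})}(T)$ equal to the infimum of such $C$; when $r_1=\cdots=r_m=r$ one writes $(r;\mathbf{p})$.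 *)

(* Defs.v *)
From Stdlib Require Import Reals ClassicalEpsilon.
Open Scope R_scope.
Set Implicit Arguments.

Record Scalars := {
  sc :> Type;
  s0 : sc; s1 : sc;
  sadd : sc -> sc -> sc;
  smul : sc -> sc -> sc;
  sopp : sc -> sc;
  sabs : sc -> R }.

Definition RS : Scalars := {| sc := R; s0 := 0; s1 := 1; sadd := Rplus;
  smul := Rmult; sopp := Ropp; sabs := Rabs |}.

Definition Cx := (R * R)%type.
Definition Cadd (z w : Cx) : Cx := (fst z + fst w, snd z + snd w).
Definition Cmul (z w : Cx) : Cx :=
  (fst z * fst w - snd z * snd w, fst z * snd w + snd z * fst w).
Definition Copp (z : Cx) : Cx := (- fst z, - snd z).
Definition Cabs (z : Cx) : R := sqrt (fst z ^ 2 + snd z ^ 2).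

Definition CS : Scalars := {| sc := Cx; s0 := (0, 0); s1 := (1, 0); sadd := Cadd;
  smul := Cmul; sopp := Copp; sabs := Cabs |}.

Definition Kof (b : bool) : Scalars := if b then RS else CS.

Record BanachSpace (K : Scalars) := {
  car :> Type;
  vzero : car;
  vadd : car -> car -> car;
  vopp : car -> car;
  vscal : sc K -> car -> car;
  vnorm : car -> R;
  vadd_assoc : forall x y z, vadd x (vadd y z) = vadd (vadd x y) z;
  vadd_comm : forall x y, vadd x y = vadd y x;
  vadd_0 : forall x, vadd x vzero = x;
  vadd_opp : forall x, vadd x (vopp x) = vzero;
  vscal_assoc : forall a b x, vscal a (vscal b x) = vscal (smul K a b) x;
  vscal_1 : forall x, vscal (s1 K) x = x;
  vscal_distr_v : forall a x y, vscal a (vadd x y) = vadd (vscal a x) (vscal a y);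
  vscal_distr_s : forall a b x, vscal (sadd K a b) x = vadd (vscal a x) (vscal b x);
  vnorm_eq0 : forall x, vnorm x = 0 <-> x = vzero;
  vnorm_tri : forall x y, vnorm (vadd x y) <= vnorm x + vnorm y;
  vnorm_scal : forall a x, vnorm (vscal a x) = sabs K a * vnorm x;
  vcomplete : forall u : nat -> car,
    (forall eps, 0 < eps -> exists N, forall i j, (N <= i)%nat -> (N <= j)%nat ->
        vnorm (vadd (u i) (vopp (u j))) < eps) ->
    exists l, forall eps, 0 < eps -> exists N, forall i, (N <= i)%nat ->
        vnorm (vadd (u i) (vopp l)) < eps }.

Arguments vzero {K} _. Arguments vadd {K} _ _ _. Arguments vopp {K} _ _.
Arguments vscal {K} _ _ _. Arguments vnorm {K} _ _.

Inductive ext := Fin (x : R) | Inf.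

Definition ext_valid (p : ext) : Prop :=
  match p with Fin x => 1 <= x | Inf => True end.

Definition inv (p : ext) : R := match p with Fin x => 1 / x | Inf => 0 end.

Definition ext_le (p q : ext) : Prop :=
  match p, q with
  | Fin a, Fin b => a <= b
  | _, Inf => True
  | Inf, Fin _ => False
  end.

Definition ext_lt (p q : ext) : Prop :=
  match p, q with
  | Fin a, Fin b => a < b
  | Fin _, Inf => True
  | Inf, _ => False
  end.

(** |1/p|_{>= k+1} (0-based index k): sum_{i = k}^{m-1} 1/p_i *)
Fixpoint sum_from (f : nat -> R) (k d : nat) : R :=
  match d with O => 0 | S d' => f k + sum_from f (S k) d' end.
Definition tail_inv (m : nat) (p : nat -> ext) (k : nat) : R :=
  sum_from (fun i => inv (p i)) k (m - k).

Fixpoint sumR (f : nat -> R) (n : nat) : R :=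
  match n with O => 0 | S n' => sumR f n' + f n' end.
Fixpoint prodR (f : nat -> R) (n : nat) : R :=
  match n with O => 1 | S n' => prodR f n' * f n' end.
Fixpoint maxabs (f : nat -> R) (n : nat) : R :=
  match n with O => 0 | S n' => Rmax (maxabs f n') (Rabs (f n')) end.

(** x^y for x >= 0, y > 0, with 0^y = 0 *)
Definition rpow (x y : R) : R := if Req_EM_T x 0 then 0 else Rpower x y.

Definition lpn (p : ext) (n : nat) (f : nat -> R) : R :=
  match p with
  | Inf => maxabs f n
  | Fin a => rpow (sumR (fun j => rpow (Rabs (f j)) a) n) (1 / a)
  end.

Definition Rsup (E : R -> Prop) : R := epsilon (inhabits 0) (fun l => is_lub E l).
Definition Rinf (E : R -> Prop) : R := - Rsup (fun x => E (- x)).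

Definition dual_ball {K} (X : BanachSpace K) (phi : X -> sc K) : Prop :=
  (forall a u v, phi (vadd X (vscal X a u) v) = sadd K (smul K a (phi u)) (phi v)) /\
  (forall x, sabs K (phi x) <= vnorm X x).

Definition wnorm {K} (X : BanachSpace K) (p : ext) (n : nat) (x : nat -> X) : R :=
  Rsup (fun t => exists phi, dual_ball X phi /\ t = lpn p n (fun j => sabs K (phi (x j)))).

(** * Multilinear maps on X_0 x ... x X_{m-1} (indices >= m are ignored) *)
Definition upd {A : nat -> Type} (x : forall i, A i) (k : nat) (u : A k) : forall i, A i :=
  fun i => match PeanoNat.Nat.eq_dec k i with
           | left e => eq_rect k A u i e
           | right _ => x i
           end.

Definition multilinear {K} (m : nat) (X : nat -> BanachSpace K) (Y : BanachSpace K)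
  (T : (forall k, X k) -> Y) : Prop :=
  (forall x y : forall k, X k, (forall k, (k < m)%nat -> x k = y k) -> T x = T y) /\
  (forall k (x : forall k, X k) (a : sc K) (u v : X k), (k < m)%nat ->
     T (upd x k (vadd (X k) (vscal (X k) a u) v)) =
     vadd Y (vscal Y a (T (upd x k u))) (T (upd x k v))).

Definition continuous_ml {K} (m : nat) (X : nat -> BanachSpace K) (Y : BanachSpace K)
  (T : (forall k, X k) -> Y) : Prop :=
  forall (x : forall k, X k) eps, 0 < eps -> exists delta, 0 < delta /\
    forall y : forall k, X k,
      (forall k, (k < m)%nat -> vnorm (X k) (vadd (X k) (y k) (vopp (X k) (x k))) < delta) ->
      vnorm Y (vadd Y (T y) (vopp Y (T x))) < eps.

(** * Mixed norm: l_{r_0} over j_0 of l_{r_1} over j_1 ... of F(j) *)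
Fixpoint mixn (r : nat -> ext) (n : nat) (F : (nat -> nat) -> R)
  (d k : nat) (j : nat -> nat) : R :=
  match d with
  | O => F j
  | S d' => lpn (r k) n (fun t => mixn r n F d' (S k)
              (fun i => if PeanoNat.Nat.eqb i k then t else j i))
  end.

Definition mixed (r : nat -> ext) (n m : nat) (F : (nat -> nat) -> R) : R :=
  mixn r n F m 0 (fun _ => O).

Definition summing_ineq {K} (m : nat) (X : nat -> BanachSpace K) (Y : BanachSpace K)
  (r p : nat -> ext) (T : (forall k, X k) -> Y) (C : R) : Prop :=
  forall (n : nat) (xs : forall k, nat -> X k),
    mixed r n m (fun j => vnorm Y (T (fun k => xs k (j k))))
      <= C * prodR (fun k => wnorm (X k) (p k) n (xs k)) m.

Definition is_summing {K} (m : nat) (X : nat -> BanachSpace K) (Y : BanachSpace K)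
  (r p : nat -> ext) (T : (forall k, X k) -> Y) : Prop :=
  multilinear m X Y T /\ continuous_ml m X Y T /\
  exists C, 0 < C /\ summing_ineq m X Y r p T C.

Definition pi_norm {K} (m : nat) (X : nat -> BanachSpace K) (Y : BanachSpace K)
  (r p : nat -> ext) (T : (forall k, X k) -> Y) : R :=
  Rinf (fun C => 0 < C /\ summing_ineq m X Y r p T C).

(* Main.v *)
Require Import Defs.
From Stdlib Require Import Reals Lra Lia ClassicalEpsilon FunctionalExtensionality.
Open Scope R_scope.


Lemma rpow_0l a : rpow 0 a = 0.
Proof. unfold rpow; destruct (Req_EM_T 0 0); lra. Qed.

Lemma rpow_pos x a : 0 < x -> rpow x a = Rpower x a.
Proof. intro; unfold rpow; destruct (Req_EM_T x 0); lra. Qed.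

Lemma rpow_ge0 x a : 0 <= rpow x a.
Proof. unfold rpow; destruct (Req_EM_T x 0). lra. unfold Rpower; left; apply exp_pos. Qed.

Lemma rpow_gt0 x a : 0 < x -> 0 < rpow x a.
Proof. intro; rewrite rpow_pos by lra; unfold Rpower; apply exp_pos. Qed.

Lemma rpow_mul x y a : 0 <= x -> 0 <= y -> rpow (x*y) a = rpow x a * rpow y a.
Proof.
  intros hx hy. destruct (Req_dec x 0). subst; rewrite Rmult_0_l, !rpow_0l; ring.
  destruct (Req_dec y 0). subst; rewrite Rmult_0_r, !rpow_0l; ring.
  rewrite !rpow_pos by nra. rewrite Rpower_mult_distr; lra.
Qed.

Lemma rpow_rpow x a b : 0 <= x -> rpow (rpow x a) b = rpow x (a*b).
Proof.
  intros hx. destruct (Req_dec x 0). subst; rewrite !rpow_0l; ring.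
  rewrite (rpow_pos x a) by lra. rewrite rpow_pos. rewrite Rpower_mult. rewrite rpow_pos; lra.
  unfold Rpower; apply exp_pos.
Qed.

Lemma rpow_1 x : 0 <= x -> rpow x 1 = x.
Proof. intros; destruct (Req_dec x 0). subst; apply rpow_0l. rewrite rpow_pos by lra; apply Rpower_1; lra. Qed.

Lemma rpow_1l a : rpow 1 a = 1.
Proof. rewrite rpow_pos by lra. unfold Rpower. rewrite ln_1, Rmult_0_r; apply exp_0. Qed.

Lemma rpow_plus x a b : 0 <= x -> rpow x (a+b) = rpow x a * rpow x b.
Proof. intros; destruct (Req_dec x 0). subst; rewrite !rpow_0l; ring. rewrite !rpow_pos by lra; apply Rpower_plus. Qed.

Lemma rpow_le x y a : 0 <= x <= y -> 0 <= a -> rpow x a <= rpow y a.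
Proof.
  intros hx ha. destruct (Req_dec x 0). subst; rewrite rpow_0l; apply rpow_ge0.
  rewrite !rpow_pos by lra. apply Rle_Rpower_l; lra.
Qed.

Lemma rpow_eq0 x a : 0 <= x -> rpow x a = 0 -> x = 0.
Proof. intros hx h. destruct (Req_dec x 0); auto. pose proof (rpow_gt0 x a); lra. Qed.

Lemma rpow_inv x a : 0 < x -> rpow (/x) a = / rpow x a.
Proof.
  intros hx. rewrite !rpow_pos. unfold Rpower. rewrite ln_Rinv by lra.
  rewrite <- exp_Ropp. f_equal; ring. lra. apply Rinv_0_lt_compat; lra.
Qed.

Lemma rpow_div x y a : 0 <= x -> 0 < y -> rpow (x/y) a = rpow x a / rpow y a.
Proof.
  intros. unfold Rdiv. assert (0 < /y) by (apply Rinv_0_lt_compat; lra).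
  rewrite rpow_mul by lra. rewrite rpow_inv by lra. reflexivity.
Qed.

Lemma rpow_le_exp x a b : 0 <= x <= 1 -> 0 < a <= b -> rpow x b <= rpow x a.
Proof.
  intros hx hab. destruct (Req_dec x 0). subst; rewrite !rpow_0l; lra.
  rewrite !rpow_pos by lra. unfold Rpower.
  destruct (Req_dec x 1). subst. rewrite ln_1, !Rmult_0_r; lra.
  assert (ln x < 0). { rewrite <- ln_1. apply ln_increasing; lra. }
  destruct (Req_dec a b). subst; lra.
  left; apply exp_increasing.
  assert (0 < b - a) by lra. assert ((b-a) * ln x < 0) by (apply Rmult_pos_neg; lra). nra.
Qed.

Lemma rpow_le1 x a : 0 <= x <= 1 -> 0 <= a -> rpow x a <= 1.
Proof. intros. rewrite <- (rpow_1l a). apply rpow_le; lra. Qed.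

Lemma rpow_inj_le x y a : 0 <= x -> 0 <= y -> 0 < a -> rpow x a <= rpow y a -> x <= y.
Proof.
  intros hx hy ha h. destruct (Rle_dec x y); auto.
  assert (rpow y a < rpow x a).
  { destruct (Req_dec y 0). subst. rewrite rpow_0l. apply rpow_gt0; lra.
    rewrite !rpow_pos by lra. apply Rlt_Rpower_l; lra. }
  lra.
Qed.

Lemma ln_le_sub1 z : 0 < z -> ln z <= z - 1.
Proof. intros. pose proof (exp_ineq1_le (ln z)). rewrite exp_ln in H0; lra. Qed.

Lemma amgm x y th : 0 <= x -> 0 <= y -> 0 < th < 1 ->
  rpow x th * rpow y (1-th) <= th * x + (1-th) * y.
Proof.
  intros hx hy hth. destruct (Req_dec x 0). subst; rewrite rpow_0l; nra.
  destruct (Req_dec y 0). subst; rewrite rpow_0l; nra.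
  rewrite !rpow_pos by lra. unfold Rpower. rewrite <- exp_plus.
  set (M := th*x + (1-th)*y). assert (hM : 0 < M) by (unfold M; nra).
  assert (h1 := ln_le_sub1 (x/M)). assert (h2 := ln_le_sub1 (y/M)).
  assert (0 < x/M) by (apply Rdiv_lt_0_compat; lra).
  assert (0 < y/M) by (apply Rdiv_lt_0_compat; lra).
  specialize (h1 H1). specialize (h2 H2).
  unfold Rdiv in h1, h2. rewrite ln_mult, ln_Rinv in h1, h2 by (try apply Rinv_0_lt_compat; lra).
  assert (th * (x * / M - 1) + (1-th) * (y * / M - 1) = 0).
  { unfold M in *. field. lra. }
  rewrite <- (exp_ln M) by lra.
  destruct (Req_dec (th * ln x + (1 - th) * ln y) (ln M)). rewrite H4; lra.
  left; apply exp_increasing. nra.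
Qed.


Lemma Rabs_eq_0 x : Rabs x = 0 -> x = 0.
Proof. intros. destruct (Req_dec x 0); auto. pose proof (Rabs_pos_lt x H0). lra. Qed.

Lemma sumR_ext f g n : (forall j, (j < n)%nat -> f j = g j) -> sumR f n = sumR g n.
Proof. induction n; simpl; intros; auto. rewrite IHn by (intros; apply H; lia). rewrite H by lia; auto. Qed.

Lemma sumR_le f g n : (forall j, (j < n)%nat -> f j <= g j) -> sumR f n <= sumR g n.
Proof. induction n; simpl; intros. lra. pose proof (H n ltac:(lia)). pose proof (IHn ltac:(intros; apply H; lia)). lra. Qed.

Lemma sumR_ge0 f n : (forall j, (j < n)%nat -> 0 <= f j) -> 0 <= sumR f n.
Proof. intros. replace 0 with (sumR (fun _ => 0) n). apply sumR_le; auto. induction n; simpl; auto. rewrite IHn; try ring. intros; apply H; lia. Qed.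

Lemma sumR_scal c f n : sumR (fun j => c * f j) n = c * sumR f n.
Proof. induction n; simpl. ring. rewrite IHn; ring. Qed.

Lemma sumR_plus f g n : sumR (fun j => f j + g j) n = sumR f n + sumR g n.
Proof. induction n; simpl. ring. rewrite IHn; ring. Qed.

Lemma sumR_swap (f : nat -> nat -> R) m n :
  sumR (fun i => sumR (fun j => f i j) n) m = sumR (fun j => sumR (fun i => f i j) m) n.
Proof.
  induction m; simpl. induction n; simpl; auto. rewrite <- IHn; ring.
  rewrite IHm. rewrite <- sumR_plus. reflexivity.
Qed.

Lemma sumR_eq0 f n : (forall j, (j < n)%nat -> 0 <= f j) -> sumR f n = 0 -> forall j, (j < n)%nat -> f j = 0.
Proof.
  induction n; simpl; intros. lia.
  assert (0 <= sumR f n) by (apply sumR_ge0; intros; apply H; lia).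
  assert (0 <= f n) by (apply H; lia).
  destruct (Nat.eq_dec j n). subst; lra.
  apply IHn; try lia; try lra. intros; apply H; lia.
Qed.

Lemma sumR_0 n : sumR (fun _ => 0) n = 0.
Proof. induction n; simpl; auto. rewrite IHn; ring. Qed.

Lemma sumR_ge_term f n j : (forall j, (j < n)%nat -> 0 <= f j) -> (j < n)%nat -> f j <= sumR f n.
Proof.
  induction n; simpl; intros. lia.
  assert (0 <= sumR f n) by (apply sumR_ge0; intros; apply H; lia).
  destruct (Nat.eq_dec j n). subst; lra.
  assert (0 <= f n) by (apply H; lia). pose proof (IHn ltac:(intros; apply H; lia) ltac:(lia)). lra.
Qed.

Lemma sumR_ind c j0 n : (j0 < n)%nat -> sumR (fun j => if Nat.eqb j j0 then c else 0) n = c.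
Proof.
  induction n; simpl; intros. lia.
  destruct (Nat.eq_dec j0 n).
  - subst. rewrite Nat.eqb_refl. rewrite (sumR_ext _ (fun _ => 0)).
    2:{ intros. destruct (Nat.eqb_spec j n); [lia|auto]. }
    rewrite sumR_0; ring.
  - rewrite IHn by lia. destruct (Nat.eqb_spec n j0); [lia|ring].
Qed.

Lemma maxabs_ge0 f n : 0 <= maxabs f n.
Proof. induction n; simpl. lra. apply Rle_trans with (maxabs f n); auto. apply Rmax_l. Qed.

Lemma maxabs_ge f n j : (j < n)%nat -> Rabs (f j) <= maxabs f n.
Proof.
  induction n; simpl; intros. lia. destruct (Nat.eq_dec j n). subst; apply Rmax_r.
  apply Rle_trans with (maxabs f n). apply IHn; lia. apply Rmax_l.
Qed.

Lemma maxabs_le f n M : 0 <= M -> (forall j, (j < n)%nat -> Rabs (f j) <= M) -> maxabs f n <= M.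
Proof. induction n; simpl; intros. auto. apply Rmax_lub. apply IHn; auto. apply H0; lia. Qed.

Lemma maxabs_att f n : (0 < n)%nat -> exists j, (j < n)%nat /\ maxabs f n = Rabs (f j).
Proof.
  induction n; simpl; intros. lia. destruct n.
  - exists 0%nat; split; auto. simpl. apply Rmax_right. apply Rabs_pos.
  - destruct IHn as [j [hj e]]. lia. unfold Rmax at 1. destruct (Rle_dec (maxabs f (S n)) (Rabs (f (S n)))).
    exists (S n); split; auto. exists j; split; auto.
Qed.

Lemma maxabs_ext f g n : (forall j, (j < n)%nat -> Rabs (f j) = Rabs (g j)) -> maxabs f n = maxabs g n.
Proof. induction n; simpl; intros; auto. rewrite IHn by (intros; apply H; lia). rewrite H by lia; auto. Qed.

Definition ppos (p : ext) : Prop := match p with Fin a => 0 < a | Inf => True end.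

Lemma lpn_ge0 p n f : 0 <= lpn p n f.
Proof. destruct p; simpl. apply rpow_ge0. apply maxabs_ge0. Qed.

Lemma lpn_ext p n f g : (forall j, (j < n)%nat -> Rabs (f j) = Rabs (g j)) -> lpn p n f = lpn p n g.
Proof.
  intros. destruct p; simpl. f_equal. apply sumR_ext; intros; rewrite H; auto. apply maxabs_ext; auto.
Qed.

Lemma lpn_mono p n f g : ppos p -> (forall j, (j < n)%nat -> Rabs (f j) <= Rabs (g j)) -> lpn p n f <= lpn p n g.
Proof.
  intros hp H. destruct p; simpl in *.
  - apply rpow_le. split. apply sumR_ge0; intros; apply rpow_ge0.
    apply sumR_le; intros. apply rpow_le. split. apply Rabs_pos. apply H; auto. lra.
    left; unfold Rdiv; rewrite Rmult_1_l; apply Rinv_0_lt_compat; lra.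
  - apply maxabs_le. apply maxabs_ge0. intros. apply Rle_trans with (Rabs (g j)). apply H; auto. apply maxabs_ge; auto.
Qed.

Lemma lpn_zero p n f : (forall j, (j < n)%nat -> f j = 0) -> lpn p n f = 0.
Proof.
  intros. destruct p; simpl.
  - rewrite (sumR_ext _ (fun _ => 0)). replace (sumR (fun _ => 0) n) with 0. apply rpow_0l.
    clear; induction n; simpl; auto. rewrite <- IHn; ring.
    intros; rewrite H, Rabs_R0, rpow_0l; auto.
  - apply Rle_antisym. apply maxabs_le. lra. intros; rewrite H, Rabs_R0; auto; lra. apply maxabs_ge0.
Qed.

Lemma lpn_fin_pow a n f : 0 < a -> rpow (lpn (Fin a) n f) a = sumR (fun j => rpow (Rabs (f j)) a) n.
Proof.
  intros. simpl. rewrite rpow_rpow. replace (1/a*a) with 1 by (field; lra). apply rpow_1.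
  apply sumR_ge0; intros; apply rpow_ge0. apply sumR_ge0; intros; apply rpow_ge0.
Qed.

Lemma lpn_homog p n c f : ppos p -> lpn p n (fun j => c * f j) = Rabs c * lpn p n f.
Proof.
  intros hp. destruct p; simpl in *.
  - rewrite (sumR_ext _ (fun j => rpow (Rabs c) x * rpow (Rabs (f j)) x)).
    2:{ intros. rewrite Rabs_mult, rpow_mul; auto; apply Rabs_pos. }
    rewrite sumR_scal. rewrite rpow_mul. rewrite rpow_rpow. replace (x * (1/x)) with 1 by (field; lra).
    rewrite rpow_1; auto. apply Rabs_pos. apply Rabs_pos. apply rpow_ge0. apply sumR_ge0; intros; apply rpow_ge0.
  - induction n; simpl. ring. rewrite IHn. rewrite Rabs_mult. rewrite RmaxRmult; auto. apply Rabs_pos.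
Qed.

Lemma lpn_eq0 p n f : ppos p -> lpn p n f = 0 -> forall j, (j < n)%nat -> f j = 0.
Proof.
  intros hp h j hj. destruct p; simpl in *.
  - apply rpow_eq0 in h. 2:{ apply sumR_ge0; intros; apply rpow_ge0. }
    apply sumR_eq0 with (j := j) in h; auto. apply rpow_eq0 in h. apply Rabs_eq_0; auto. apply Rabs_pos.
    intros; apply rpow_ge0.
  - pose proof (maxabs_ge f n j hj). pose proof (Rabs_pos (f j)). apply Rabs_eq_0. lra.
Qed.

Lemma lpn_exp a b n f : 1 <= a <= b -> lpn (Fin b) n f <= lpn (Fin a) n f.
Proof.
  intros hab. set (N := lpn (Fin a) n f).
  destruct (Req_dec N 0).
  - rewrite lpn_zero. apply lpn_ge0. apply lpn_eq0 with (p := Fin a); simpl; auto; lra.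
  - assert (hN : 0 < N) by (pose proof (lpn_ge0 (Fin a) n f); unfold N in *; lra).
    set (g := fun j => / N * f j).
    assert (ef : forall j, f j = N * g j) by (intros; unfold g; field; lra).
    rewrite (lpn_ext _ n f (fun j => N * g j)) by (intros; rewrite ef; auto).
    rewrite lpn_homog by (simpl; lra). rewrite Rabs_pos_eq by lra.
    assert (hg : lpn (Fin a) n g = 1).
    { unfold g. rewrite lpn_homog by (simpl; lra). rewrite Rabs_pos_eq. fold N. field; lra.
      left; apply Rinv_0_lt_compat; lra. }
    assert (hs : sumR (fun j => rpow (Rabs (g j)) a) n = 1).
    { rewrite <- lpn_fin_pow by lra. rewrite hg. apply rpow_1l. }
    assert (hgj : forall j, (j < n)%nat -> Rabs (g j) <= 1).
    { intros. apply rpow_inj_le with a. apply Rabs_pos. lra. lra. rewrite rpow_1l. rewrite <- hs.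
      apply sumR_ge_term with (f := fun j => rpow (Rabs (g j)) a); auto. intros; apply rpow_ge0. }
    assert (lpn (Fin b) n g <= 1).
    { simpl. apply rpow_le1. split. apply sumR_ge0; intros; apply rpow_ge0.
      rewrite <- hs. apply sumR_le. intros. apply rpow_le_exp. split. apply Rabs_pos. auto. lra.
      unfold Rdiv; rewrite Rmult_1_l; left; apply Rinv_0_lt_compat; lra. }
    nra.
Qed.


Definition tv (t : ext) : Prop := match t with Inf => True | Fin T => 1 <= T end.

Lemma inv_eq_reg x y : 0 < x -> 0 < y -> 1/x = 1/y -> x = y.
Proof.
  intros hx hy h. replace x with (/ (1/x)) by (field; lra). rewrite h. field; lra.
Qed.

Lemma dual r t s n b : 1 <= r -> tv t -> ext_valid s -> inv s = 1/r - inv t ->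
  (forall j, 0 <= b j) ->
  exists lam : nat -> R, (forall j, 0 <= lam j) /\ lpn t n lam <= 1 /\
    lpn s n b <= lpn (Fin r) n (fun j => lam j * b j).
Proof.
  intros hr ht hs e hb.
  assert (hr' : 0 < 1/r) by (unfold Rdiv; rewrite Rmult_1_l; apply Rinv_0_lt_compat; lra).
  destruct t as [T|].
  - simpl in ht, e. destruct s as [S|].
    + simpl in hs, e.
      destruct (Req_dec (lpn (Fin S) n b) 0) as [B0|B0].
      * exists (fun _ => 0). split. intros; lra. split. rewrite lpn_zero; auto; lra.
        rewrite B0. apply lpn_ge0.
      * set (B := lpn (Fin S) n b) in *.
        assert (hB : 0 < B) by (pose proof (lpn_ge0 (Fin S) n b); unfold B in *; lra).
        assert (e1 : 1/S * (S*r*T) = (1/r - 1/T) * (S*r*T)) by (rewrite e; auto).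
        replace (1/S*(S*r*T)) with (r*T) in e1 by (field; lra).
        replace ((1/r - 1/T) * (S*r*T)) with (S*T - S*r) in e1 by (field; lra).
        assert (hsum : sumR (fun j => rpow (Rabs (b j)) S) n = rpow B S).
        { unfold B. rewrite lpn_fin_pow by lra. auto. }
        assert (hBS : 0 < rpow B S) by (apply rpow_gt0; lra).
        assert (hx : sumR (fun j => rpow (b j / B) S) n = 1).
        { rewrite (sumR_ext _ (fun j => / rpow B S * rpow (Rabs (b j)) S)).
          rewrite sumR_scal, hsum. field; lra.
          intros. rewrite rpow_div by (auto; lra). rewrite Rabs_pos_eq by auto. unfold Rdiv; ring. }
        exists (fun j => rpow (b j / B) (S/T)). split. intros; apply rpow_ge0. split.
        -- simpl. rewrite (sumR_ext _ (fun j => rpow (b j / B) S)). rewrite hx, rpow_1l; lra.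
           intros. rewrite Rabs_pos_eq by apply rpow_ge0. rewrite rpow_rpow.
           f_equal. field; lra. apply Rmult_le_pos. auto. left; apply Rinv_0_lt_compat; lra.
        -- right. simpl.
           rewrite (sumR_ext _ (fun j => rpow B r * rpow (b j / B) S)).
           rewrite sumR_scal, hx, Rmult_1_r. rewrite rpow_rpow by lra.
           replace (r * (1/r)) with 1 by (field; lra). rewrite rpow_1 by lra. reflexivity.
           intros. assert (0 <= b j / B) by (apply Rmult_le_pos; auto; left; apply Rinv_0_lt_compat; lra).
           replace (rpow (b j / B) (S / T) * b j) with (B * (rpow (b j / B) (S / T) * (b j / B))) by (field; lra).
           rewrite Rabs_pos_eq by (apply Rmult_le_pos; [lra|apply Rmult_le_pos; auto; apply rpow_ge0]).
           rewrite rpow_mul by (try lra; apply Rmult_le_pos; auto; apply rpow_ge0).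
           rewrite rpow_mul by (try apply rpow_ge0; auto).
           rewrite rpow_rpow by auto. f_equal.
           rewrite <- rpow_plus by auto. f_equal.
           apply Rmult_eq_reg_r with T. 2: lra. field_simplify; try lra.
    + simpl in e. assert (T = r). { apply inv_eq_reg; lra. } subst T.
      destruct n as [|n].
      * exists (fun _ => 0). split. intros; lra. split. rewrite lpn_zero; auto; lra.
        simpl. rewrite rpow_0l. lra.
      * destruct (maxabs_att b (S n)) as [js [hjs ej]]. lia.
        exists (fun j => if Nat.eqb j js then 1 else 0). split. intros; destruct (Nat.eqb j js); lra. split.
        -- unfold lpn. rewrite (sumR_ext _ (fun j => if Nat.eqb j js then 1 else 0)).
           rewrite sumR_ind by auto. rewrite rpow_1l; lra.
           intros. destruct (Nat.eqb j js). rewrite Rabs_R1, rpow_1l; auto. rewrite Rabs_R0, rpow_0l; auto.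
        -- unfold lpn at 1. rewrite ej. right. unfold lpn.
           rewrite (sumR_ext _ (fun j => if Nat.eqb j js then rpow (Rabs (b js)) r else 0)).
           rewrite sumR_ind by auto. rewrite rpow_rpow by apply Rabs_pos.
           replace (r * (1/r)) with 1 by (field; lra). rewrite rpow_1 by apply Rabs_pos. auto.
           intros. destruct (Nat.eqb_spec j js). subst; rewrite Rmult_1_l; auto.
           rewrite Rmult_0_l, Rabs_R0, rpow_0l; auto.
  - simpl in e. destruct s as [S|].
    + simpl in hs, e. assert (S = r). { apply inv_eq_reg; lra. } subst S.
      exists (fun _ => 1). split. intros; lra. split.
      simpl. apply maxabs_le. lra. intros; rewrite Rabs_R1; lra.
      right. apply lpn_ext. intros; rewrite Rmult_1_l; auto.
    + simpl in e. lra.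
Qed.

Lemma ext_inv_pos p : ext_valid p -> inv p = 0 -> p = Inf.
Proof.
  destruct p; simpl; intros; auto. exfalso. unfold Rdiv in H0. rewrite Rmult_1_l in H0.
  pose proof (Rinv_0_lt_compat x ltac:(lra)). lra.
Qed.

Lemma holder p t q n f g : ext_valid p -> tv t -> tv q -> inv p = inv t + inv q ->
  (forall j, 0 <= f j) -> (forall j, 0 <= g j) ->
  lpn p n (fun j => f j * g j) <= lpn t n f * lpn q n g.
Proof.
  intros hp ht hq e hf hg.
  destruct q as [Q|]; destruct t as [T|]; simpl in ht, hq, e.
  -
    destruct p as [P|]; simpl in e, hp.
    2:{ exfalso. assert (0 < 1/T) by (unfold Rdiv; rewrite Rmult_1_l; apply Rinv_0_lt_compat; lra).
        assert (0 < 1/Q) by (unfold Rdiv; rewrite Rmult_1_l; apply Rinv_0_lt_compat; lra). lra. }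
    set (A := sumR (fun j => rpow (Rabs (f j)) T) n).
    set (B := sumR (fun j => rpow (Rabs (g j)) Q) n).
    assert (hA0 : 0 <= A) by (apply sumR_ge0; intros; apply rpow_ge0).
    assert (hB0 : 0 <= B) by (apply sumR_ge0; intros; apply rpow_ge0).
    assert (hR : 0 <= lpn (Fin T) n f * lpn (Fin Q) n g) by (apply Rmult_le_pos; apply lpn_ge0).
    destruct (Req_dec A 0) as [A0|A0].
    { rewrite lpn_zero; auto. intros. apply sumR_eq0 with (j := j) in A0; auto.
      apply rpow_eq0 in A0. apply Rabs_eq_0 in A0. rewrite A0; ring. apply Rabs_pos. intros; apply rpow_ge0. }
    destruct (Req_dec B 0) as [B0|B0].
    { rewrite lpn_zero; auto. intros. apply sumR_eq0 with (j := j) in B0; auto.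
      apply rpow_eq0 in B0. apply Rabs_eq_0 in B0. rewrite B0; ring. apply Rabs_pos. intros; apply rpow_ge0. }
    assert (hA : 0 < A) by lra. assert (hB : 0 < B) by lra.
    assert (e1 : 1/P * (P*T*Q) = (1/T + 1/Q) * (P*T*Q)) by (rewrite e; auto).
    replace (1/P * (P*T*Q)) with (T*Q) in e1 by (field; lra).
    replace ((1/T + 1/Q) * (P*T*Q)) with (P*Q + P*T) in e1 by (field; lra).
    set (th := P/T).
    assert (hth1 : 1 - th = P / Q). { unfold th. apply Rmult_eq_reg_r with (T*Q). 2: nra. field_simplify; lra. }
    assert (hth : 0 < th < 1).
    { split. unfold th; apply Rdiv_lt_0_compat; lra. assert (0 < P/Q) by (apply Rdiv_lt_0_compat; lra). lra. }
    assert (key : forall j, rpow (Rabs (f j * g j)) P <=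
       rpow A th * rpow B (1-th) * (th * (/A * rpow (Rabs (f j)) T) + (1-th) * (/B * rpow (Rabs (g j)) Q))).
    { intros. rewrite Rabs_mult, rpow_mul by apply Rabs_pos.
      assert (ef : rpow (Rabs (f j)) P = rpow A th * rpow (/A * rpow (Rabs (f j)) T) th).
      { rewrite rpow_mul. rewrite rpow_rpow by apply Rabs_pos. rewrite rpow_inv by lra.
        replace (T * th) with P by (unfold th; field; lra). field. apply Rgt_not_eq, rpow_gt0; lra.
        left; apply Rinv_0_lt_compat; lra. apply rpow_ge0. }
      assert (eg : rpow (Rabs (g j)) P = rpow B (1-th) * rpow (/B * rpow (Rabs (g j)) Q) (1-th)).
      { rewrite rpow_mul. rewrite rpow_rpow by apply Rabs_pos. rewrite rpow_inv by lra.
        replace (Q * (1-th)) with P by (rewrite hth1; field; lra). field. apply Rgt_not_eq, rpow_gt0; lra.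
        left; apply Rinv_0_lt_compat; lra. apply rpow_ge0. }
      rewrite ef, eg.
      assert (h := amgm (/A * rpow (Rabs (f j)) T) (/B * rpow (Rabs (g j)) Q) th).
      replace (rpow A th * rpow (/ A * rpow (Rabs (f j)) T) th * (rpow B (1 - th) * rpow (/ B * rpow (Rabs (g j)) Q) (1 - th)))
        with (rpow A th * rpow B (1-th) * (rpow (/ A * rpow (Rabs (f j)) T) th * rpow (/ B * rpow (Rabs (g j)) Q) (1 - th))) by ring.
      apply Rmult_le_compat_l. apply Rmult_le_pos; apply rpow_ge0.
      apply h; auto. apply Rmult_le_pos. left; apply Rinv_0_lt_compat; lra. apply rpow_ge0.
      apply Rmult_le_pos. left; apply Rinv_0_lt_compat; lra. apply rpow_ge0. }
    assert (hS : sumR (fun j => rpow (Rabs (f j * g j)) P) n <= rpow A th * rpow B (1-th)).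
    { eapply Rle_trans. apply sumR_le. intros; apply key.
      rewrite sumR_scal, sumR_plus, !sumR_scal. fold A B. right. field; lra. }
    simpl. fold A B. eapply Rle_trans. apply rpow_le. split. apply sumR_ge0; intros; apply rpow_ge0. apply hS.
    unfold Rdiv; rewrite Rmult_1_l; left; apply Rinv_0_lt_compat; lra.
    rewrite rpow_mul by apply rpow_ge0. rewrite !rpow_rpow by lra. right. f_equal; f_equal.
    unfold th; field; lra. rewrite hth1; field; lra.
  -
    rewrite Rplus_0_l in e. destruct p as [P|]. 2:{ simpl in e. assert (0 < 1/Q) by (unfold Rdiv; rewrite Rmult_1_l; apply Rinv_0_lt_compat; lra). lra. }
    simpl in hp, e. assert (P = Q) by (apply inv_eq_reg; lra). subst P.
    eapply Rle_trans. apply lpn_mono with (g := fun j => maxabs f n * g j). simpl; lra.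
    intros. rewrite !Rabs_mult. apply Rmult_le_compat_r. apply Rabs_pos. rewrite (Rabs_pos_eq (maxabs f n)) by apply maxabs_ge0. apply maxabs_ge; auto.
    rewrite lpn_homog by (simpl; lra). rewrite Rabs_pos_eq by apply maxabs_ge0. simpl; lra.
  - rewrite Rplus_0_r in e. destruct p as [P|]. 2:{ simpl in e. assert (0 < 1/T) by (unfold Rdiv; rewrite Rmult_1_l; apply Rinv_0_lt_compat; lra). lra. }
    simpl in hp, e. assert (P = T) by (apply inv_eq_reg; lra). subst P.
    eapply Rle_trans. apply lpn_mono with (g := fun j => maxabs g n * f j). simpl; lra.
    intros. rewrite !Rabs_mult. rewrite Rmult_comm. apply Rmult_le_compat_r. apply Rabs_pos. rewrite (Rabs_pos_eq (maxabs g n)) by apply maxabs_ge0. apply maxabs_ge; auto.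
    rewrite lpn_homog by (simpl; lra). rewrite Rabs_pos_eq by apply maxabs_ge0. simpl; lra.
  - rewrite Rplus_0_r in e. apply ext_inv_pos in e; auto. subst p. simpl.
    apply maxabs_le. apply Rmult_le_pos; apply maxabs_ge0.
    intros. rewrite Rabs_mult. apply Rmult_le_compat; try apply Rabs_pos; apply maxabs_ge; auto.
Qed.


Definition setj (j : nat -> nat) (k t : nat) : nat -> nat := fun i => if Nat.eqb i k then t else j i.

Lemma mixn_S r n F d k j : mixn r n F (S d) k j = lpn (r k) n (fun t => mixn r n F d (S k) (setj j k t)).
Proof. reflexivity. Qed.

Fixpoint flat (n : nat) (G : (nat -> nat) -> R) (d k : nat) (j : nat -> nat) : R :=
  match d with O => G j | S d' => sumR (fun t => flat n G d' (S k) (setj j k t)) n end.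

Lemma M_nonneg r n F d k j : (forall j, 0 <= F j) -> 0 <= mixn r n F d k j.
Proof. destruct d; simpl; intros; auto. apply lpn_ge0. Qed.

Lemma M_cong r n F1 F2 d : forall k j,
  (forall j', (forall i, (i < k \/ k + d <= i)%nat -> j' i = j i) -> F1 j' = F2 j') ->
  mixn r n F1 d k j = mixn r n F2 d k j.
Proof.
  induction d; simpl; intros k j H. apply H; auto.
  f_equal. apply functional_extensionality; intro t. apply IHd.
  intros j' hj. apply H. intros i hi. rewrite hj by lia. unfold setj.
  destruct (Nat.eqb_spec i k); auto; lia.
Qed.

Lemma M_homog r n F c d : forall k j, (forall i, ppos (r i)) -> 0 <= c ->
  mixn r n (fun j => c * F j) d k j = c * mixn r n F d k j.
Proof.
  induction d; simpl; intros k j hr hc. auto.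
  transitivity (lpn (r k) n (fun t => c * mixn r n F d (S k) (setj j k t))).
  f_equal. apply functional_extensionality; intro t. apply IHd; auto.
  rewrite lpn_homog by auto. rewrite Rabs_pos_eq; auto.
Qed.

Lemma M_exp a b n F d : forall k j, 1 <= a <= b -> (forall j, 0 <= F j) ->
  mixn (fun _ => Fin b) n F d k j <= mixn (fun _ => Fin a) n F d k j.
Proof.
  induction d; intros k j hab hF. simpl; lra. rewrite !mixn_S.
  eapply Rle_trans. apply lpn_mono. simpl; lra.
  intros t ht. rewrite !Rabs_pos_eq by (apply M_nonneg; auto). apply IHd; auto.
  apply lpn_exp; auto.
Qed.

Lemma M3 r n F d : forall k j,
  mixn r n F (S d) k j = mixn r n (fun j' => lpn (r (k+d)%nat) n (fun t => F (setj j' (k+d) t))) d k j.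
Proof.
  induction d; intros k j.
  - simpl. rewrite Nat.add_0_r. reflexivity.
  - rewrite mixn_S. rewrite (mixn_S r n _ d). f_equal. apply functional_extensionality; intro t.
    rewrite IHd. replace (S k + d)%nat with (k + S d)%nat by lia. reflexivity.
Qed.

Lemma flat_nonneg n G d : forall k j, (forall j, 0 <= G j) -> 0 <= flat n G d k j.
Proof. induction d; simpl; intros; auto. apply sumR_ge0; intros; apply IHd; auto. Qed.

Lemma FL rho n H d : forall k j, (forall j, 0 <= H j) -> 1 <= rho ->
  mixn (fun _ => Fin rho) n H d k j = rpow (flat n (fun j => rpow (H j) rho) d k j) (1/rho).
Proof.
  induction d; simpl; intros k j hH hr.
  - rewrite rpow_rpow by auto. replace (rho * (1/rho)) with 1 by (field; lra). rewrite rpow_1; auto.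
  - f_equal. apply sumR_ext; intros t _. rewrite IHd by auto.
    rewrite Rabs_pos_eq by apply rpow_ge0. rewrite rpow_rpow. replace (1/rho*rho) with 1 by (field; lra).
    apply rpow_1. apply flat_nonneg; intros; apply rpow_ge0. apply flat_nonneg; intros; apply rpow_ge0.
Qed.

Lemma setj_comm j a b x y : a <> b -> setj (setj j a x) b y = setj (setj j b y) a x.
Proof.
  intros. apply functional_extensionality; intro i. unfold setj.
  destruct (Nat.eqb_spec i b); destruct (Nat.eqb_spec i a); auto. lia.
Qed.

Lemma flat_swap n G d : forall k j,
  flat n G (S d) k j = sumR (fun t => flat n G d k (setj j (k+d) t)) n.
Proof.
  induction d; intros k j.
  - simpl. rewrite Nat.add_0_r. reflexivity.
  - change (flat n G (S (S d)) k j) with (sumR (fun t0 => flat n G (S d) (S k) (setj j k t0)) n).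
    rewrite (sumR_ext _ (fun t0 => sumR (fun t => flat n G d (S k) (setj (setj j k t0) (S k + d) t)) n)).
    2:{ intros; apply IHd. }
    rewrite sumR_swap. apply sumR_ext. intros t _. simpl. apply sumR_ext. intros t0 _.
    rewrite setj_comm by lia. replace (k + S d)%nat with (S (k + d)) by lia. reflexivity.
Qed.

Lemma SW rho n H d j0 : (forall j, 0 <= H j) -> 1 <= rho ->
  mixn (fun _ => Fin rho) n H (S d) 0 j0 =
  lpn (Fin rho) n (fun t => mixn (fun _ => Fin rho) n H d 0 (setj j0 d t)).
Proof.
  intros hH hr. rewrite FL by auto. rewrite flat_swap. simpl lpn. f_equal.
  apply sumR_ext; intros t _. rewrite FL by auto. rewrite Rabs_pos_eq by apply rpow_ge0.
  rewrite rpow_rpow. replace (1/rho*rho) with 1 by (field; lra). rewrite rpow_1. reflexivity.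
  apply flat_nonneg; intros; apply rpow_ge0. apply flat_nonneg; intros; apply rpow_ge0.
Qed.

Lemma prodR_ext f g d : (forall i, (i < d)%nat -> f i = g i) -> prodR f d = prodR g d.
Proof. induction d; simpl; intros; auto. rewrite IHd by (intros; apply H; lia). rewrite H by lia; auto. Qed.

Lemma prodR_ge0 f d : (forall i, (i < d)%nat -> 0 <= f i) -> 0 <= prodR f d.
Proof. induction d; simpl; intros. lra. apply Rmult_le_pos. apply IHd; intros; apply H; lia. apply H; lia. Qed.

Lemma sum_from_snoc f i c : sum_from f i (S c) = sum_from f i c + f (i + c)%nat.
Proof.
  revert i; induction c; intros; simpl. rewrite Nat.add_0_r; ring.
  simpl in IHc. rewrite IHc. replace (S i + c)%nat with (i + S c)%nat by lia. ring.
Qed.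


Lemma PL d : forall (rho : R) (t s : nat -> ext) n (F : (nat -> nat) -> R) j0,
  1 <= rho -> (forall i, (i < d)%nat -> tv (t i)) -> (forall i, (i < d)%nat -> ext_valid (s i)) ->
  (forall i, (1 <= i < d)%nat -> exists S, s i = Fin S) ->
  (forall i, (i < d)%nat -> inv (s i) = 1/rho - sum_from (fun l => inv (t l)) i (d - i)) ->
  (forall j, 0 <= F j) ->
  exists lam : nat -> nat -> R, (forall i x, 0 <= lam i x) /\
    (forall i, (i < d)%nat -> lpn (t i) n (lam i) <= 1) /\
    mixn s n F d 0 j0 <= mixn (fun _ => Fin rho) n (fun j => prodR (fun i => lam i (j i)) d * F j) d 0 j0.
Proof.
  induction d as [|d IH]; intros rho t s n F j0 hr ht hs hfin hinv hF.
  - exists (fun _ _ => 0). split. intros; lra. split. intros; lia. simpl. lra.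
  - destruct d as [|d'].
    +
      assert (e0 := hinv 0%nat ltac:(lia)). simpl in e0. rewrite Rplus_0_r in e0.
      destruct (dual rho (t 0%nat) (s 0%nat) n (fun x => F (setj j0 0 x)) hr (ht 0%nat ltac:(lia))
                  (hs 0%nat ltac:(lia)) e0 ltac:(intros; apply hF)) as [lam0 [h1 [h2 h3]]].
      exists (fun _ => lam0). split. auto. split. intros i hi. replace i with 0%nat by lia. auto.
      rewrite !mixn_S. simpl mixn. eapply Rle_trans. apply h3. right. apply lpn_ext.
      intros. replace (setj j0 0 j 0) with j by reflexivity. rewrite Rmult_1_l; auto.
    + set (d := S d') in *.
      destruct (hfin d ltac:(unfold d; lia)) as [S' hS'].
      assert (hsd : 1 <= S') by (pose proof (hs d ltac:(lia)); rewrite hS' in H; exact H).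
      assert (eS : 1/S' = 1/rho - inv (t d)).
      { pose proof (hinv d ltac:(lia)). rewrite hS' in H. replace (S d - d)%nat with 1%nat in H by lia.
        simpl in H. rewrite H. ring. }
      assert (htd : 0 <= inv (t d)).
      { pose proof (ht d ltac:(lia)). destruct (t d); simpl in *. unfold Rdiv; rewrite Rmult_1_l; left; apply Rinv_0_lt_compat; lra. lra. }
      assert (hSr : rho <= S').
      { apply Rnot_lt_le; intro. assert (1/S' > 1/rho). { unfold Rdiv; rewrite !Rmult_1_l. apply Rinv_lt_contravar; nra. } lra. }
      set (F' := fun j' => lpn (Fin S') n (fun x => F (setj j' d x))).
      assert (hF' : forall j, 0 <= F' j) by (intros; apply lpn_ge0).
      destruct (IH S' t s n F' j0 hsd ltac:(intros; apply ht; lia) ltac:(intros; apply hs; lia)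
                 ltac:(intros; apply hfin; lia)) as [lamI [hI1 [hI2 hI3]]]; auto.
      { intros i hi. rewrite hinv by lia. replace (S d - i)%nat with (S (d - i)) by lia.
        rewrite sum_from_snoc. replace (i + (d - i))%nat with d by lia. rewrite eS. ring. }
      set (P := fun j => prodR (fun i => lamI i (j i)) d).
      assert (hP : forall j, 0 <= P j) by (intros; apply prodR_ge0; intros; auto).
      set (G := fun j => P j * F j).
      assert (hG : forall j, 0 <= G j) by (intros; apply Rmult_le_pos; auto).
      set (b := fun x => mixn (fun _ => Fin rho) n G d 0 (setj j0 d x)).
      assert (hb : forall x, 0 <= b x) by (intros; apply M_nonneg; auto).
      destruct (dual rho (t d) (Fin S') n b hr (ht d ltac:(lia)) ltac:(simpl; lra) ltac:(simpl; lra) hb)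
        as [lamd [hd1 [hd2 hd3]]].
      set (lam := fun i => if Nat.eqb i d then lamd else lamI i).
      exists lam. split.
      { intros; unfold lam; destruct (Nat.eqb i d); auto. }
      split.
      { intros i hi. unfold lam. destruct (Nat.eqb_spec i d). subst; auto. apply hI2; lia. }
      assert (ea : mixn s n F (S d) 0 j0 = mixn s n F' d 0 j0).
      { rewrite M3. simpl plus. rewrite hS'. reflexivity. }
      rewrite ea. eapply Rle_trans. apply hI3.
      fold P.
      assert (ec : mixn (fun _ => Fin S') n (fun j => P j * F' j) d 0 j0 = mixn (fun _ => Fin S') n G (S d) 0 j0).
      { rewrite M3. simpl plus. f_equal. apply functional_extensionality; intro j.
        unfold F'. rewrite <- (Rabs_pos_eq (P j)) by auto. rewrite <- lpn_homog by (simpl; lra).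
        apply lpn_ext. intros x _. unfold G. f_equal. f_equal. unfold P. apply prodR_ext.
        intros i hi. unfold setj. destruct (Nat.eqb_spec i d); [lia|auto]. }
      change (mixn (fun _ => Fin S') n (fun j => P j * F' j) d 0 j0 <= mixn (fun _ => Fin rho) n (fun j => prodR (fun i => lam i (j i)) (S d) * F j) (S d) 0 j0). rewrite ec. rewrite SW by auto.
      eapply Rle_trans. apply lpn_mono with (g := b). simpl; lra.
      intros x _. rewrite !Rabs_pos_eq by (apply M_nonneg; auto). apply M_exp. split; [exact hr|exact hSr]. exact hG.
      eapply Rle_trans. apply hd3.
      right. rewrite SW.
      2:{ intros; apply Rmult_le_pos. apply prodR_ge0; intros; unfold lam; destruct (Nat.eqb i d); auto. auto. }
      2: auto.
      apply lpn_ext. intros x _. f_equal. unfold b. rewrite <- M_homog by (auto; intros; simpl; lra).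
      apply M_cong. intros j' hj'.
      change (prodR (fun i => lam i (j' i)) (S d)) with (prodR (fun i => lam i (j' i)) d * lam d (j' d)).
      assert (ejd : j' d = x). { rewrite hj' by lia. unfold setj. rewrite Nat.eqb_refl. auto. }
      replace (lam d) with lamd by (unfold lam; rewrite Nat.eqb_refl; auto). rewrite ejd. unfold G, P.
      rewrite (prodR_ext (fun i => lam i (j' i)) (fun i => lamI i (j' i))). ring.
      intros i hi. unfold lam. destruct (Nat.eqb_spec i d); [lia|auto].
Qed.


Definition emb (b : bool) (c : R) : sc (Kof b) :=
  match b as b' return sc (Kof b') with true => c | false => (c, 0) end.

Lemma sabs_ge0 b (z : sc (Kof b)) : 0 <= sabs (Kof b) z.
Proof. destruct b; simpl. apply Rabs_pos. apply sqrt_pos. Qed.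

Lemma sabs_s0 b : sabs (Kof b) (s0 (Kof b)) = 0.
Proof. destruct b; simpl. apply Rabs_R0. unfold Cabs; simpl. match goal with |- sqrt ?E = _ => replace E with 0 by ring end. apply sqrt_0. Qed.

Lemma sadd_opp b : sadd (Kof b) (s1 (Kof b)) (sopp (Kof b) (s1 (Kof b))) = s0 (Kof b).
Proof. destruct b; simpl. ring. unfold Cadd, Copp; simpl. f_equal; ring. Qed.

Lemma sabs_opp1 b : sabs (Kof b) (sopp (Kof b) (s1 (Kof b))) = 1.
Proof. destruct b; simpl. rewrite Rabs_Ropp; apply Rabs_R1. unfold Cabs, Copp; simpl. match goal with |- sqrt ?E = _ => replace E with 1 by ring end. apply sqrt_1. Qed.

Lemma sabs_emb b c : 0 <= c -> sabs (Kof b) (emb b c) = c.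
Proof. intros; destruct b; simpl. apply Rabs_pos_eq; auto. unfold Cabs; simpl. match goal with |- sqrt ?E = _ => replace E with (c*c) by ring end. apply sqrt_square; auto. Qed.

Lemma sabs_smul_emb b c z : 0 <= c -> sabs (Kof b) (smul (Kof b) (emb b c) z) = c * sabs (Kof b) z.
Proof.
  intros; destruct b; simpl. rewrite Rabs_mult, Rabs_pos_eq; auto.
  unfold Cabs, Cmul. cbn [fst snd]. replace ((c * fst z - 0 * snd z) ^ 2 + (c * snd z + 0 * fst z) ^ 2) with ((c*c) * (fst z ^2 + snd z ^2)) by ring.
  rewrite sqrt_mult_alt. rewrite sqrt_square; auto. nra.
Qed.

Lemma sadd_s0 b z : sadd (Kof b) z (s0 (Kof b)) = z.
Proof. destruct b; simpl. ring. unfold Cadd; destruct z; simpl; f_equal; ring. Qed.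

Lemma sabs_eq0 b z : sabs (Kof b) z = 0 -> z = s0 (Kof b).
Proof.
  destruct b; simpl; intros. apply Rabs_eq_0; auto.
  unfold Cabs in H. apply sqrt_eq_0 in H. destruct z as [x y]; simpl in *. f_equal; nra. nra.
Qed.


Lemma vopp_unique {b : bool} (X : BanachSpace (Kof b)) x y : vadd X x y = vzero X -> y = vopp X x.
Proof.
  intros h. rewrite <- (vadd_0 X y). rewrite <- (vadd_opp X x). rewrite vadd_assoc.
  rewrite (vadd_comm X y x). rewrite h. rewrite vadd_comm. apply vadd_0.
Qed.

Lemma vscal0 {b : bool} (X : BanachSpace (Kof b)) x : vscal X (s0 (Kof b)) x = vzero X.
Proof. apply vnorm_eq0. rewrite vnorm_scal, sabs_s0; ring. Qed.

Lemma vnorm_ge0 {b : bool} (X : BanachSpace (Kof b)) x : 0 <= vnorm X x.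
Proof.
  assert (e : vscal X (sopp (Kof b) (s1 (Kof b))) x = vopp X x).
  { apply vopp_unique. rewrite <- (vscal_1 X x) at 1. rewrite <- vscal_distr_s. rewrite sadd_opp. apply vscal0. }
  assert (h0 : vnorm X (vzero X) = 0) by (apply vnorm_eq0; auto).
  pose proof (vnorm_tri X x (vopp X x)). rewrite vadd_opp, h0 in H.
  rewrite <- e, vnorm_scal, sabs_opp1 in H. lra.
Qed.

Lemma phi_zero {b : bool} (X : BanachSpace (Kof b)) phi : dual_ball X phi -> phi (vzero X) = s0 (Kof b).
Proof.
  intros [_ h]. apply sabs_eq0. apply Rle_antisym. specialize (h (vzero X)).
  replace (vnorm X (vzero X)) with 0 in h by (symmetry; apply vnorm_eq0; auto). auto. apply sabs_ge0.
Qed.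

Lemma phi_scal {b : bool} (X : BanachSpace (Kof b)) phi c u : dual_ball X phi -> 0 <= c ->
  sabs (Kof b) (phi (vscal X (emb b c) u)) = c * sabs (Kof b) (phi u).
Proof.
  intros hp hc. pose proof (proj1 hp (emb b c) u (vzero X)). rewrite vadd_0 in H. rewrite H.
  rewrite phi_zero, sadd_s0 by auto. apply sabs_smul_emb; auto.
Qed.

Lemma zero_dual {b : bool} (X : BanachSpace (Kof b)) : dual_ball X (fun _ => s0 (Kof b)).
Proof.
  split. intros. destruct b; simpl. ring. unfold Cadd, Cmul; simpl. f_equal; ring.
  intros; rewrite sabs_s0; apply vnorm_ge0.
Qed.

Definition wset {b : bool} (X : BanachSpace (Kof b)) p n (xs : nat -> X) : R -> Prop :=
  fun t => exists phi, dual_ball X phi /\ t = lpn p n (fun j => sabs (Kof b) (phi (xs j))).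

Lemma wnorm_lub {b : bool} (X : BanachSpace (Kof b)) p n xs : ppos p -> is_lub (wset X p n xs) (wnorm X p n xs).
Proof.
  intros hp. unfold wnorm, Rsup. apply (epsilon_spec (inhabits 0) (fun l => is_lub (wset X p n xs) l)).
  destruct (completeness (wset X p n xs)) as [l hl].
  - exists (lpn p n (fun j => vnorm X (xs j))). intros t [phi [hphi ->]].
    apply lpn_mono; auto. intros. rewrite !Rabs_pos_eq by (try apply sabs_ge0; apply vnorm_ge0).
    apply (proj2 hphi).
  - exists (lpn p n (fun j => sabs (Kof b) (s0 (Kof b)))). exists (fun _ => s0 (Kof b)). split; auto. apply zero_dual.
  - exists l; exact hl.
Qed.

Lemma wnorm_ge0 {b : bool} (X : BanachSpace (Kof b)) p n xs : ppos p -> 0 <= wnorm X p n xs.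
Proof.
  intros hp. destruct (wnorm_lub X p n xs hp) as [h1 _].
  eapply Rle_trans. 2: apply h1. apply lpn_ge0. exists (fun _ => s0 (Kof b)). split; auto. apply zero_dual.
Qed.

Lemma wnorm_scale {b : bool} (X : BanachSpace (Kof b)) p t q n xs lam :
  ext_valid p -> tv t -> tv q -> inv p = inv t + inv q -> (forall j, 0 <= lam j) -> lpn t n lam <= 1 ->
  wnorm X p n (fun j => vscal X (emb b (lam j)) (xs j)) <= wnorm X q n xs.
Proof.
  intros hp ht hq e hl hl1.
  assert (pp : ppos p) by (destruct p; simpl in *; auto; lra).
  assert (pq : ppos q) by (destruct q; simpl in *; auto; lra).
  destruct (wnorm_lub X p n (fun j => vscal X (emb b (lam j)) (xs j)) pp) as [_ h2].
  destruct (wnorm_lub X q n xs pq) as [h3 _].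
  apply h2. intros x [phi [hphi ->]].
  rewrite (lpn_ext _ _ _ (fun j => lam j * sabs (Kof b) (phi (xs j)))).
  2:{ intros. rewrite phi_scal; auto. }
  eapply Rle_trans. apply (holder p t q); auto. intros; apply sabs_ge0.
  assert (lpn q n (fun j => sabs (Kof b) (phi (xs j))) <= wnorm X q n xs).
  { apply h3. exists phi; split; auto. }
  pose proof (lpn_ge0 t n lam). pose proof (lpn_ge0 q n (fun j => sabs (Kof b) (phi (xs j)))).
  nra.
Qed.

Lemma T_upd_zero {b : bool} m (X : nat -> BanachSpace (Kof b)) (Y : BanachSpace (Kof b)) T x k :
  multilinear m X Y T -> (k < m)%nat -> T (upd x k (vzero (X k))) = vzero Y.
Proof.
  intros [_ h] hk. pose proof (h k x (s1 (Kof b)) (vzero (X k)) (vzero (X k)) hk) as H.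
  rewrite vscal_1, vadd_0, vscal_1 in H. set (Z := T (upd x k (vzero (X k)))) in *.
  assert (vadd Y Z (vopp Y Z) = vadd Y (vadd Y Z Z) (vopp Y Z)) by (rewrite <- H; auto).
  rewrite <- vadd_assoc, vadd_opp, vadd_0 in H0. auto.
Qed.

Lemma T_scal {b : bool} m (X : nat -> BanachSpace (Kof b)) (Y : BanachSpace (Kof b)) T x k a u :
  multilinear m X Y T -> (k < m)%nat ->
  vnorm Y (T (upd x k (vscal (X k) a u))) = sabs (Kof b) a * vnorm Y (T (upd x k u)).
Proof.
  intros hT hk. pose proof (proj2 hT k x a u (vzero (X k)) hk) as H.
  rewrite vadd_0 in H. rewrite H. rewrite (T_upd_zero m X Y T x k hT hk), vadd_0. apply vnorm_scal.
Qed.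

Lemma T_scal_all {b : bool} m (X : nat -> BanachSpace (Kof b)) (Y : BanachSpace (Kof b)) T (lam : nat -> R) (x : forall k, X k) :
  multilinear m X Y T -> (forall k, 0 <= lam k) ->
  vnorm Y (T (fun k => vscal (X k) (emb b (lam k)) (x k))) = prodR lam m * vnorm Y (T x).
Proof.
  intros hT hl.
  set (z := fun i : nat => (fun k => if Nat.ltb k i then vscal (X k) (emb b (lam k)) (x k) else x k) : forall k, X k).
  assert (Hi : forall i, (i <= m)%nat -> vnorm Y (T (z i)) = prodR lam i * vnorm Y (T x)).
  { induction i; intros hi.
    - simpl. rewrite Rmult_1_l. reflexivity.
    - assert (e1 : T (z (S i)) = T (upd (z i) i (vscal (X i) (emb b (lam i)) (x i)))).
      { apply (proj1 hT). intros k hk. unfold upd. destruct (Nat.eq_dec i k) as [ei|ni].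
        + subst k. simpl. unfold z. destruct (Nat.ltb_spec i (S i)); [auto|lia].
        + unfold z. destruct (Nat.ltb_spec k (S i)); destruct (Nat.ltb_spec k i); auto; lia. }
      assert (e2 : T (upd (z i) i (x i)) = T (z i)).
      { apply (proj1 hT). intros k hk. unfold upd. destruct (Nat.eq_dec i k) as [ei|ni].
        + subst k. simpl. unfold z. rewrite Nat.ltb_irrefl. auto.
        + auto. }
      rewrite e1, (T_scal m X Y T) by (auto; lia). rewrite e2, IHi by lia. rewrite sabs_emb by auto. simpl. ring. }
  rewrite <- Hi by lia. f_equal. apply (proj1 hT). intros k hk. unfold z.
  destruct (Nat.ltb_spec k m); [auto|lia].
Qed.




Lemma Rsup_lub E : (exists x, E x) -> bound E -> is_lub E (Rsup E).
Proof.
  intros h1 h2. unfold Rsup. apply (epsilon_spec (inhabits 0) (fun l => is_lub E l)).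
  destruct (completeness E h2 h1) as [l hl]. exists l; auto.
Qed.

Lemma Rinf_mono (E1 E2 : R -> Prop) : (exists x, E1 x) -> (forall x, E1 x -> E2 x) -> (forall x, E2 x -> 0 < x) ->
  Rinf E2 <= Rinf E1.
Proof.
  intros [c hc] h12 hpos. unfold Rinf.
  assert (b2 : bound (fun x => E2 (- x))). { exists 0. intros x hx. apply hpos in hx. lra. }
  assert (b1 : bound (fun x => E1 (- x))). { exists 0. intros x hx. apply h12, hpos in hx. lra. }
  assert (n1 : exists x, E1 (- x)). { exists (- c). rewrite Ropp_involutive; auto. }
  assert (n2 : exists x, E2 (- x)). { exists (- c). rewrite Ropp_involutive; auto. }
  destruct (Rsup_lub _ n1 b1) as [_ l1]. destruct (Rsup_lub _ n2 b2) as [u2 _].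
  assert (Rsup (fun x => E1 (- x)) <= Rsup (fun x => E2 (- x))).
  { apply l1. intros x hx. apply u2. apply h12; auto. }
  lra.
Qed.

Lemma sum_from_ext f g k c : (forall l, (k <= l < k + c)%nat -> f l = g l) -> sum_from f k c = sum_from g k c.
Proof. revert k; induction c; simpl; intros; auto. rewrite H by lia. rewrite IHc; auto. intros; apply H; lia. Qed.

Lemma sum_from_plus f g k c : sum_from (fun l => f l + g l) k c = sum_from f k c + sum_from g k c.
Proof. revert k; induction c; simpl; intros. ring. rewrite IHc; ring. Qed.

Lemma sum_from_split f k a b : sum_from f k (a + b) = sum_from f k a + sum_from f (k + a) b.
Proof.
  revert k; induction a; simpl; intros. rewrite Nat.add_0_r; ring. rewrite IHa.
  replace (S k + a)%nat with (k + S a)%nat by lia. ring.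
Qed.

Lemma sum_from_ge0 f k c : (forall l, (k <= l < k + c)%nat -> 0 <= f l) -> 0 <= sum_from f k c.
Proof. revert k; induction c; simpl; intros. lra. pose proof (H k ltac:(lia)). pose proof (IHc (S k) ltac:(intros; apply H; lia)). lra. Qed.

Lemma prodR_le f g d : (forall i, (i < d)%nat -> 0 <= f i <= g i) -> prodR f d <= prodR g d.
Proof.
  induction d; simpl; intros. lra. apply Rmult_le_compat. apply prodR_ge0; intros; apply H; lia.
  apply H; lia. apply IHd; intros; apply H; lia. apply H; lia.
Qed.

Definition tdef (p q : ext) : ext :=
  match p, q with
  | Fin a, Fin c => if Req_EM_T a c then Inf else Fin (a*c/(c-a))
  | Fin a, Inf => Fin a
  | Inf, _ => Inf
  end.

Lemma tdef_ok p q : ext_valid p -> ext_valid q -> ext_le p q -> tv (tdef p q) /\ inv p = inv (tdef p q) + inv q.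
Proof.
  destruct p as [a|]; destruct q as [c|]; simpl; intros hp hq hle; try tauto.
  - destruct (Req_EM_T a c). subst; simpl; split; auto; ring.
    simpl. assert (c - a > 0) by lra. split.
    + assert (a*c/(c-a) - 1 = (a*c - (c-a))/(c-a)) by (field; lra).
      assert (0 <= (a*c - (c-a))/(c-a)) by (apply Rmult_le_pos; [nra|left; apply Rinv_0_lt_compat; lra]). lra.
    + field. split; lra.
  - split; auto. ring.
  - split; auto. ring.
Qed.

Theorem theorem3 (b : bool) (m : nat) (Hm : (1 <= m)%nat) (r : R) (Hr : 1 <= r)
  (p q s : nat -> ext)
  (Hp : forall k, (k < m)%nat -> ext_valid (p k))
  (Hq : forall k, (k < m)%nat -> ext_valid (q k))
  (Hcond :
     ((forall k, (k < m)%nat -> ext_le (p k) (q k)) /\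
      1 / r - tail_inv m p 0 + tail_inv m q 0 > 0)
     \/
     ((forall k, (1 <= k < m)%nat -> ext_le (p k) (q k)) /\
      ext_lt (p 0%nat) (q 0%nat) /\
      1 / r - tail_inv m p 0 + tail_inv m q 0 >= 0))
  (Hs_def : forall k, (k < m)%nat ->
     inv (s k) - tail_inv m q k = 1 / r - tail_inv m p k)
  (Hs : forall k, (k < m)%nat -> ext_valid (s k))
  (X : nat -> BanachSpace (Kof b)) (Y : BanachSpace (Kof b))
  (T : (forall k, X k) -> Y) :
  is_summing m X Y (fun _ => Fin r) p T ->
  is_summing m X Y s q T /\
  pi_norm m X Y s q T <= pi_norm m X Y (fun _ => Fin r) p T.
Proof.
  intros [hml [hcont [C [hC hsum]]]].
  set (tt := fun k => tdef (p k) (q k)).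
  assert (hle : forall k, (k < m)%nat -> ext_le (p k) (q k)).
  { intros k hk. destruct Hcond as [[h _]|[h [h0 _]]]. auto.
    destruct k. destruct (p 0%nat); destruct (q 0%nat); simpl in *; auto; lra. apply h; lia. }
  assert (htt : forall k, (k < m)%nat -> tv (tt k) /\ inv (p k) = inv (tt k) + inv (q k)).
  { intros; apply tdef_ok; auto. }
  set (g := fun l => inv (tt l)).
  assert (hg : forall l, (l < m)%nat -> 0 <= g l).
  { intros l hl. unfold g. destruct (htt l hl) as [h _]. destruct (tt l); simpl in *.
    unfold Rdiv; rewrite Rmult_1_l; left; apply Rinv_0_lt_compat; lra. lra. }
  assert (hinv : forall k, (k < m)%nat -> inv (s k) = 1/r - sum_from g k (m - k)).
  { intros k hk. pose proof (Hs_def k hk). unfold tail_inv in H.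
    rewrite (sum_from_ext (fun i => inv (p i)) (fun l => g l + inv (q l))) in H.
    rewrite sum_from_plus in H. lra. intros l hl. unfold g. apply htt. lia. }
  assert (hs0 : inv (s 0%nat) = 1 / r - tail_inv m p 0 + tail_inv m q 0).
  { pose proof (Hs_def 0%nat ltac:(lia)). lra. }
  assert (hfin : forall i, (1 <= i < m)%nat -> exists S, s i = Fin S).
  { intros i hi.
    assert (hsplit : sum_from g 0 m = sum_from g 0 i + sum_from g (0 + i) (m - i)).
    { rewrite <- sum_from_split. f_equal. lia. }
    assert (e : inv (s i) = inv (s 0%nat) + sum_from g 0 i).
    { rewrite !hinv by lia. rewrite Nat.sub_0_r, hsplit. simpl. ring. }
    assert (pos : 0 < inv (s i)).
    { destruct Hcond as [[_ h]|[_ [h0 h]]].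
      - pose proof (sum_from_ge0 g 0 i ltac:(intros; apply hg; lia)). lra.
      - destruct i. lia. simpl in e.
        pose proof (sum_from_ge0 g 1 i ltac:(intros; apply hg; lia)).
        assert (0 < g 0%nat).
        { unfold g. destruct (htt 0%nat ltac:(lia)) as [_ h1].
          pose proof (Hp 0%nat ltac:(lia)). pose proof (Hq 0%nat ltac:(lia)).
          destruct (p 0%nat) as [a|]; destruct (q 0%nat) as [c|]; simpl in *; try tauto.
          + assert (1/c < 1/a). { unfold Rdiv; rewrite !Rmult_1_l. apply Rinv_lt_contravar; nra. } lra.
          + assert (0 < 1/a) by (unfold Rdiv; rewrite Rmult_1_l; apply Rinv_0_lt_compat; lra). lra. }
        lra. }
    destruct (s i) as [S|]. exists S; auto. simpl in pos. lra. }
  assert (key : forall C, 0 < C -> summing_ineq m X Y (fun _ => Fin r) p T C -> summing_ineq m X Y s q T C).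
  { intros C0 hC0 hs n xs.
    set (a := fun j : nat -> nat => vnorm Y (T (fun k => xs k (j k)))).
    destruct (PL m r tt s n a (fun _ => O) Hr ltac:(intros; apply htt; auto) Hs hfin hinv
                ltac:(intros; apply vnorm_ge0)) as [lam [hl0 [hl1 hl2]]].
    unfold mixed. eapply Rle_trans. apply hl2.
    set (xs' := fun k j => vscal (X k) (emb b (lam k j)) (xs k j)).
    assert (e : (fun j => prodR (fun i => lam i (j i)) m * a j) = (fun j => vnorm Y (T (fun k => xs' k (j k))))).
    { apply functional_extensionality; intro j. unfold xs', a. symmetry.
      apply (T_scal_all m X Y T (fun k => lam k (j k)) (fun k => xs k (j k))); auto. }
    rewrite e. eapply Rle_trans. apply (hs n xs'). apply Rmult_le_compat_l. lra.
    apply prodR_le. intros k hk. split.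
    - apply wnorm_ge0. pose proof (Hp k hk). destruct (p k); simpl in *; auto; lra.
    - unfold xs'. destruct (htt k hk) as [h1 h2]. pose proof (Hq k hk) as h3.
      apply (wnorm_scale (X k) (p k) (tt k) (q k)); auto. }
  split.
  - split; auto. split; auto. exists C; split; auto.
  - unfold pi_norm. apply Rinf_mono.
    + exists C; auto.
    + intros x [h1 h2]; split; auto.
    + intros x [h1 _]; auto.
Qed.
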